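(* Let $K$ be an infinite field and let $f_1,\dots,f_r \in K[x_1,\dots,x_n]$ be homogeneous polynomials, where $f_1$ has degree $d\ge 1$ and its support contains $x_i^d$ for some $i$. Let $Z \subseteq \mathbb{A}^n$ be the closed subscheme defined by the ideal generated by $S_n.f_1 \cup \dots \cup S_n.f_r$. Then for general coefficients of $f_1$ with respect to its support, $Z$ is set-theoretically equal to $\{0\}$ (i.e., the radical of its defining ideal contains $(x_1,\dots,x_n)$), and the corresponding subscheme of $\mathbb{P}^{n-1}$ is empty.
   Context: $S_n$ acts on $K[x_1,\dots,x_n]$ by permuting the variables, $\sigma.x_i = x_{\sigma(i)}$, and $S_n.f$ denotes the orbit of $f$. The support of a polynomial is its set of monomials with nonzero coefficient. ''For general coefficients of $f_1$ with respect to its support $\mathcal{A}$'' means: the set of polynomials with support contained in $\mathcal{A}$ for which the assertion holds contains a non-empty Zariski-open subset of $K^{\mathcal{A}}$ (the space of such coefficient vectors). *)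

(* Defs.v *)
From mathcomp Require Import all_boot all_order all_algebra all_fingroup.
From mathcomp Require Import mpoly.
Set Implicit Arguments. Unset Strict Implicit. Unset Printing Implicit Defensive.
Import GRing.Theory.
Local Open Scope ring_scope.

Definition in_ideal (K : fieldType) (n : nat)
    (gen : {mpoly K[n]} -> Prop) (p : {mpoly K[n]}) : Prop :=
  exists s : seq ({mpoly K[n]} * {mpoly K[n]}),
    (forall q, q \in s -> gen q.2) /\ p = \sum_(q <- s) q.1 * q.2.

(* The generating set  S_n.g_1 ∪ ... ∪ S_n.g_r  where gs = [g_1; ...; g_r];
   the action is  sigma . x_i = x_(sigma i)  (msym). *)
Definition sym_orbits_gen (K : fieldType) (n : nat)
    (gs : seq {mpoly K[n]}) (p : {mpoly K[n]}) : Prop :=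
  exists (s : 'S_n) (g : {mpoly K[n]}), g \in gs /\ p = msym s g.

(* Affine zero set of the ideal is {0} set-theoretically:
   each x_i lies in the radical of the ideal. *)
Definition affine_zero_only (K : fieldType) (n : nat)
    (gen : {mpoly K[n]} -> Prop) : Prop :=
  forall i : 'I_n, exists k : nat, in_ideal gen ('X_i ^+ k).

(* The projective subscheme Proj(K[x]/I) of P^(n-1) is empty:
   the homogeneous ideal I contains all forms of some degree N,
   i.e. (K[x]/I)_N = 0 (equivalently, every monomial of degree N lies in I). *)
Definition proj_empty (K : fieldType) (n : nat)
    (gen : {mpoly K[n]} -> Prop) : Prop :=
  exists N : nat, forall m : 'X_{1..n}, mdeg m = N -> in_ideal gen 'X_[m].

Definition poly_of_coeffs (K : fieldType) (n : nat) (A : seq 'X_{1..n})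
    (c : 'I_(size A) -> K) : {mpoly K[n]} :=
  \sum_(j < size A) c j *: 'X_[nth 0%MM A j].

(* Main.v *)
Require Import Defs.
From mathcomp Require Import all_boot all_order all_algebra all_fingroup.
From mathcomp Require Import mpoly.
From mathcomp Require Import zify.
Set Implicit Arguments. Unset Strict Implicit. Unset Printing Implicit Defensive.
Set Warnings "-notation-overridden,-ambiguous-paths,-notation-incompatible-prefix".
Import GRing.Theory.
Local Open Scope ring_scope.

Definition mp n (s : 'S_n) (m : 'X_{1..n}) : 'X_{1..n} :=
  [multinom m ((s^-1)%g i) | i < n].

Lemma msymXp (K : fieldType) n (s : 'S_n) m :
  msym s ('X_[m] : {mpoly K[n]}) = 'X_[mp s m].
Proof. by rewrite msymX. Qed.

Lemma mdeg_mp n (s : 'S_n) m : mdeg (mp s m) = mdeg m.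
Proof. exact: mdeg_mperm. Qed.

Lemma coef_expand (K : fieldType) n (A : seq 'X_{1..n})
  (c : 'I_(size A) -> K) (s : 'S_n) (u z : 'X_{1..n}) :
  ('X_[u] * msym s (poly_of_coeffs c))@_z =
  \sum_(j < size A) c j * (((u + mp s (nth 0%MM A j))%MM == z)%:R).
Proof.
rewrite /poly_of_coeffs raddf_sum mulr_sumr raddf_sum /=.
apply: eq_bigr => j _.
by rewrite msymZ -scalerAr mcoeffZ msymXp -mpolyXD mcoeffX.
Qed.

Lemma mp_tperm n (i0 j : 'I_n) d :
  mp (tperm i0 j) (U_(i0) *+ d)%MM = (U_(j) *+ d)%MM.
Proof.
apply/mnmP => i; rewrite mnmE !mulmnE !mnm1E tpermV.
congr (nat_of_bool _ * d)%N.
by rewrite -{1}(tpermR i0 j) (inj_eq (@perm_inj _ _)).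
Qed.

Lemma mp_U n (s : 'S_n) (i : 'I_n) d :
  mp s (U_(i) *+ d)%MM = (U_(s i) *+ d)%MM.
Proof.
apply/mnmP => x; rewrite mnmE !mulmnE !mnm1E.
by rewrite -(inj_eq (@perm_inj _ s)) permKV.
Qed.

Lemma in_ideal_mono (K : fieldType) n (g1 g2 : {mpoly K[n]} -> Prop) p :
  (forall q, g1 q -> g2 q) -> in_ideal g1 p -> in_ideal g2 p.
Proof. by move=> H [s [Hs ->]]; exists s; split => // q /Hs /H. Qed.

Lemma pigeon n d (z : 'X_{1..n}) : (0 < n)%N -> (0 < d)%N -> mdeg z = (n * d)%N ->
  exists j : 'I_n, (d <= z j)%N.
Proof.
move=> n0 d0 hz; apply/existsP; apply: contraT; rewrite negb_exists => /forallP H.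
have: (mdeg z <= \sum_(i < n) d.-1)%N.
  rewrite mdegE; apply: leq_sum => i _; have := H i; rewrite -ltnNge.
  by case: d d0 {H hz} => // d' _ /=; rewrite ltnS.
rewrite sum_nat_const card_ord hz; case: d d0 {H hz} => // d' _.
rewrite mulnS => Hle; lia.
Qed.

Notation DegT n N k := {x : 'X_{1..n < N.+1} | mdeg (bmnm x) == k}.
Notation ColT n N d := ('S_n * DegT n N (N - d)%N)%type.

Definition rowm n N (r : 'I_#|{: DegT n N N}|) : 'X_{1..n} := bmnm (sval (enum_val r)).
Definition colS n N d (k : 'I_#|{: ColT n N d}|) : 'S_n := (enum_val k).1.
Definition colU n N d (k : 'I_#|{: ColT n N d}|) : 'X_{1..n} := bmnm (sval (enum_val k).2).

Lemma rowm_inj n N : injective (@rowm n N).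
Proof.
move=> r1 r2; rewrite /rowm => /val_inj /val_inj /enum_val_inj //.
Qed.

Lemma rowm_surj n N z : mdeg z = N -> exists r, @rowm n N r = z.
Proof.
move=> hz; have hz1 : (mdeg z < N.+1)%N by rewrite hz.
have hz2 : mdeg (bmnm (BMultinom hz1)) == N by rewrite /= hz.
exists (enum_rank (exist _ (BMultinom hz1) hz2 : DegT n N N)).
by rewrite /rowm enum_rankK.
Qed.

Lemma colU_deg n N d k : mdeg (@colU n N d k) = (N - d)%N.
Proof. by rewrite /colU; apply/eqP; exact: (svalP (enum_val k).2). Qed.

Definition Mp (K : fieldType) n N d (A : seq 'X_{1..n}) :
  'M[{mpoly K[size A]}]_(#|{: DegT n N N}|, #|{: ColT n N d}|) :=
  \matrix_(r, k) \sum_(j < size A)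
     ((((colU k + mp (colS k) (nth 0%MM A j))%MM == rowm r)%:R)%:MP * 'X_j).

Lemma Mp_eval (K : fieldType) n N d (A : seq 'X_{1..n}) c r k :
  (map_mx (meval c) (Mp K N d A)) r k =
  \sum_(j < size A) c j * (((colU k + mp (colS k) (nth 0%MM A j))%MM == rowm r)%:R).
Proof.
rewrite !mxE raddf_sum; apply: eq_bigr => j _.
rewrite /=.
by rewrite rmorphM /= mevalC mevalXU mulrC.
Qed.

Lemma main_lemma (K : fieldType) n (d : nat) (A : seq 'X_{1..n}) (i0 : 'I_n) :
  (0 < d)%N -> (forall a, a \in A -> mdeg a = d) -> uniq A ->
  (U_(i0) *+ d)%MM \in A ->
  exists N : nat, exists h : {mpoly K[size A]}, h != 0 /\
   forall c, h.@[c] != 0 ->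
   forall z : 'X_{1..n}, mdeg z = N ->
     in_ideal (sym_orbits_gen [:: poly_of_coeffs c]) 'X_[z].
Proof.
move=> d0 hA uA hi0.
have n0 : (0 < n)%N by case: n i0 {hA hi0 A uA} => [[]|].
set N := (n * d)%N.
have dN : (d <= N)%N by rewrite /N leq_pmull.
exists N.
have hj0lt : (index (U_(i0) *+ d)%MM A < size A)%N by rewrite index_mem.
pose j0 : 'I_(size A) := Ordinal hj0lt.
have hj0 : nth 0%MM A j0 = (U_(i0) *+ d)%MM by rewrite nth_index.
pose c0 : 'I_(size A) -> K := fun j => (j == j0)%:R.
pose M := Mp K N d A.
pose M0 := map_mx (meval c0) M.
have M0E : forall r k, M0 r k = ((colU k + (U_(colS k i0) *+ d))%MM == rowm r)%:R.
  move=> r k; rewrite /M0 /M Mp_eval (bigD1 j0) //= big1 ?addr0 => [|j /negbTE hj].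
    by rewrite /c0 eqxx mul1r hj0 mp_U.
  by rewrite /c0 hj mul0r.
have ex_k : forall r, exists k, [forall r', M0 r' k == (r' == r)%:R].
  move=> r; set z := rowm r.
  have hzN : mdeg z = N by apply/eqP; exact: (svalP (enum_val r)).
  have [j hj] := pigeon n0 d0 hzN.
  set u := (z - U_(j) *+ d)%MM.
  have hle : (U_(j) *+ d <= z)%MM.
    apply/mnm_lepP => x; rewrite mulmnE mnm1E.
    by case: eqP => [<-|]; rewrite ?mul1n ?mul0n.
  have hzu : (u + U_(j) *+ d)%MM = z by rewrite submK.
  have hud : mdeg u = (N - d)%N.
    by rewrite -hzN -hzu mdegD mdegMn mdeg1 mul1n addnK.
  have hu1 : (mdeg u < N.+1)%N by rewrite hud ltnS leq_subr.
  have hu2 : mdeg (bmnm (BMultinom hu1)) == (N - d)%N by rewrite /= hud.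
  exists (enum_rank ((tperm i0 j, exist _ (BMultinom hu1) hu2) : ColT n N d)).
  apply/forallP => r'; rewrite M0E /colS /colU enum_rankK /= tpermL hzu /z.
  by apply/eqP; rewrite (inj_eq (@rowm_inj _ _)) eq_sym.
pose pk r := [pick k | [forall r', M0 r' k == (r' == r)%:R]].
pose B0 : 'M[K]_(_, _) := \matrix_(k, r) (pk r == Some k)%:R.
have M0B0 : M0 *m B0 = 1%:M.
  have B0E : forall k r, B0 k r = (pk r == Some k)%:R by move=> k r; rewrite /B0 mxE.
  apply/matrixP => r' r; rewrite [LHS]mxE [RHS]mxE.
  under eq_bigr do rewrite B0E.
  rewrite /pk; case: (pickP (fun k => [forall r'', M0 r'' k == (r'' == r)%:R])) => [k0 /forallP hk0 | H]; last first.
    by have [k hk] := ex_k r; rewrite H in hk.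
  rewrite (bigD1 k0) //= eqxx mulr1 big1 ?addr0; last first.
    by move=> k hk; rewrite (negbTE (_ : Some k0 != Some k)) ?mulr0 // eq_sym.
  by rewrite -(eqP (hk0 r')) /M0 mxE.
exists (\det (M *m map_mx (fun x => x%:MP) B0)).
have hev : forall c, (\det (M *m map_mx (fun x => x%:MP) B0)).@[c] =
                     \det (map_mx (meval c) M *m B0).
  move=> c; rewrite -det_map_mx map_mxM; congr (\det (_ *m _)).
  by apply/matrixP => i j; rewrite !mxE /= mevalC.
split.
  apply/eqP => h0; have := hev c0; rewrite h0 meval0 -/M0 M0B0 det1.
  by move/eqP; rewrite eq_sym oner_eq0.
move=> c hc z hz.
set Mc := map_mx (meval c) M.
have hu : Mc *m B0 \in unitmx by rewrite unitmxE unitfE -hev.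
set W := B0 *m invmx (Mc *m B0).
have McW : Mc *m W = 1%:M by rewrite /W mulmxA mulmxV.
have [r hr] := rowm_surj hz.
set g := poly_of_coeffs c.
exists [seq ((W k r)%:MP * 'X_[colU k], msym (colS k) g) | k <- index_enum 'I_#|{: ColT n N d}| ].
split.
  move=> q /mapP [k _ ->] /=; exists (colS k), g; split => //.
  by rewrite inE eqxx.
rewrite big_map; apply/mpolyP => y; rewrite mcoeffX raddf_sum /=.
under eq_bigr do rewrite -mulrA mcoeffCM coef_expand.
have [hy|hy] := eqVneq (mdeg y) N.
  have [r' hr'] := rowm_surj hy.
  have E : (Mc *m W) r' r = \sum_k W k r * \sum_(j < size A) c j *
       (((colU k + mp (colS k) (nth 0%MM A j))%MM == rowm r')%:R).
    by rewrite mxE; apply: eq_bigr => k _; rewrite /Mc /M Mp_eval mulrC.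
  rewrite -hr' -E McW mxE -hr (inj_eq (@rowm_inj _ _)) eq_sym.
  by case: eqP.
rewrite big1 => [|k _]; last first.
  rewrite big1 ?mulr0 // => j _.
  have hdeg : mdeg (colU k + mp (colS k) (nth 0%MM A j))%MM = N.
    by rewrite mdegD colU_deg mdeg_mp hA ?mem_nth ?subnK.
  case: eqP => [e|]; last by rewrite mulr0.
  by move: hy; rewrite -e hdeg eqxx.
case: eqP => // e; move: hy; by rewrite -e hz eqxx.
Qed.

Theorem corollary1p3 (K : fieldType) (n : nat)
    (K_infinite : forall s : seq K, exists x : K, x \notin s)
    (d : nat) (f1 : {mpoly K[n]}) (fs : seq {mpoly K[n]}) :
  (0 < d)%N ->
  f1 \is d.-homog ->
  (exists i : 'I_n, (U_(i) *+ d)%MM \in msupp f1) ->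
  (forall f, f \in fs -> exists e : nat, f \is e.-homog) ->
  exists h : {mpoly K[size (msupp f1)]}, h != 0 /\
    forall c : 'I_(size (msupp f1)) -> K, h.@[c] != 0 ->
      let g := poly_of_coeffs c in
      affine_zero_only (sym_orbits_gen (g :: fs)) /\
      proj_empty (sym_orbits_gen (g :: fs)).
Proof.
move=> d0 hf1 [i0 hi0] _.
have hA : forall a, a \in msupp f1 -> mdeg a = d by move/dhomogP: hf1.
have [N [h [hnz hh]]] := main_lemma K d0 hA (msupp_uniq f1) hi0.
exists h; split => // c hc g.
have key := hh c hc.
have mono : forall q, sym_orbits_gen [:: g] q -> sym_orbits_gen (g :: fs) q.
  move=> q [s [g' [hg' ->]]]; exists s, g'; split => //.
  by move: hg'; rewrite !inE => ->.
split.
  move=> i; exists N; apply: (in_ideal_mono mono).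
  have -> : 'X_i ^+ N = 'X_[U_(i) *+ N] :> {mpoly K[n]} by rewrite -mpolyXn.
  by apply: key; rewrite mdegMn mdeg1 mul1n.
exists N => m hm; apply: (in_ideal_mono mono); exact: key.
Qed.
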